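(* Fix $r\in[0,1]$ and consider the recombinator dynamics. Then: (1) (Trait payoff monotonicity) For every state $x\in\Delta(A)$, every dimension $d$, and every pair of traits $a_d,a'_d\in\operatorname{supp}_d(x)$, $$u_x(a_d)>u_x(a'_d)\iff\frac{\dot x(a_d)}{x(a_d)}>\frac{\dot x(a'_d)}{x(a'_d)},$$ where $\dot x(a_d)=\sum_{a_{-d}}\dot x(a_d,a_{-d})$. (2) A state $x$ is stationary if and only if both (a) $u_x(a_d)=u_x$ for every $d\in D$ and every $a_d\in\operatorname{supp}_d(x)$, and (b) $(1-r)\frac{u_x(a)}{u_x}+r\,m_x(a)=1$ for every $a\in\operatorname{supp}(x)$.
   Context: Setting: $D=\{1,\dots,|D|\}$ is a finite set of dimensions with $|D|\ge 2$; each $d\in D$ has a finite nonempty set of traits $A_d$; the set of types is $A=\prod_{d\in D}A_d$, a type being $a=(a_d)_{d\in D}$, and we write $a=(a_d,a_{-d})$ with $a_{-d}\in A_{-d}=\prod_{d'\ne d}A_{d'}$; ''$a_d\in a$'' means $a_d$ is the $d$-th component of $a$. A payoff function $u:A\times A\to\mathbb{R}_{>0}$ is given. A state is $x\in\Delta(A)$. Define $u_x(a)=\sum_{a'\in A}x(a')u(a,a')$ and $u_x=\sum_{a\in A}x(a)u_x(a)$. Marginals: $x(a_d)=\sum_{a_{-d}}x(a_d,a_{-d})$. Supports: $\operatorname{supp}(x)=\{a:x(a)>0\}$, $\operatorname{supp}_d(x)=\{a_d:x(a_d)>0\}$. For $x(a_d)>0$ the trait payoff is $u_x(a_d)=\frac{1}{x(a_d)}\sum_{a_{-d}}x(a_d,a_{-d})u_x(a_d,a_{-d})$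 (and $x(a_d)u_x(a_d)$ is understood as $\sum_{a_{-d}}x(a_d,a_{-d})u_x(a_d,a_{-d})$). The recombinator dynamics with recombination rate $r\in[0,1]$ is $$\dot x(a)=(1-r)\frac{x(a)u_x(a)}{u_x}+r\prod_{a_d\in a}\frac{x(a_d)u_x(a_d)}{u_x}-x(a),\qquad a\in A.$$ A state is stationary if $\dot x(a)=0$ for all $a$. For $a\in\operatorname{supp}(x)$, the trait-to-type ratio is $m_x(a)=\frac{\prod_{a_d\in a}x(a_d)}{x(a)}$. *)

(* Defs.v *)
From HB Require Import structures.
From mathcomp Require Import all_boot all_order all_algebra.
Unset Printing Implicit Defensive.
Import Order.TTheory GRing.Theory Num.Theory.
Local Open Scope ring_scope.

(* Dimensions D = 'I_n (n = |D|); traits of dimension d : Atr d (a finType);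
   types A = prod_d Atr d, represented as dependent finite functions. *)
Definition type_of {n : nat} (Atr : 'I_n -> finType) : finType :=
  {dffun forall d : 'I_n, Atr d}.

Section Defs.
Context {R : realFieldType} {n : nat} {Atr : 'I_n -> finType}.
Notation A := (type_of Atr).
Variable u : A -> A -> R.

Definition comp (a : A) (d : 'I_n) : Atr d :=
  (a : {dffun forall d : 'I_n, Atr d}) d.

Definition is_state (x : A -> R) : Prop :=
  (forall a, 0 <= x a) /\ \sum_(a : A) x a = 1.

Definition ux (x : A -> R) (a : A) : R := \sum_(a' : A) x a' * u a a'.
Definition uavg (x : A -> R) : R := \sum_(a : A) x a * ux x a.

Definition marg (x : A -> R) (d : 'I_n) (t : Atr d) : R :=
  \sum_(a : A | comp a d == t) x a.

(* x(a_d) u_x(a_d) := sum_{a_{-d}} x(a_d,a_{-d}) u_x(a_d,a_{-d}) *)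
Definition trait_wpay (x : A -> R) (d : 'I_n) (t : Atr d) : R :=
  \sum_(a : A | comp a d == t) x a * ux x a.

(* trait payoff u_x(a_d) (meaningful when x(a_d) > 0) *)
Definition tpay (x : A -> R) (d : 'I_n) (t : Atr d) : R :=
  trait_wpay x d t / marg x d t.

Definition xdot (r : R) (x : A -> R) (a : A) : R :=
  (1 - r) * (x a * ux x a / uavg x)
  + r * \prod_(d : 'I_n) (trait_wpay x d (comp a d) / uavg x)
  - x a.

Definition xdot_marg (r : R) (x : A -> R) (d : 'I_n) (t : Atr d) : R :=
  \sum_(a : A | comp a d == t) xdot r x a.

Definition stationary (r : R) (x : A -> R) : Prop := forall a, xdot r x a = 0.

(* trait-to-type ratio m_x(a) (for x(a) > 0) *)
Definition mratio (x : A -> R) (a : A) : R :=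
  (\prod_(d : 'I_n) marg x d (comp a d)) / x a.

End Defs.

(* Main.v *)
Require Import Defs.
From HB Require Import structures.
From mathcomp Require Import all_boot all_order all_algebra.
From mathcomp Require Import ring lra.
Import Order.TTheory GRing.Theory Num.Theory.
Local Open Scope ring_scope.

Lemma sum_prod_dffun (R : comNzRingType) (I : finType) (T_ : I -> finType)
  (F : forall i, T_ i -> R) :
  \sum_(a : {dffun forall i, T_ i}) \prod_i F i (a i) = \prod_i \sum_(s : T_ i) F i s.
Proof.
rewrite (reindex (@dffun_of_fprod I T_)); last exact/onW_bij/dffun_of_fprod_bij.
have := @big_fprod R 0 1 *%R +%R I T_ (fun i => [ffun s => F i s]).
move=> H.
transitivity (\sum_(t : fprod T_) \prod_(i in I) [ffun s => F i s] (t i)).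
  by apply: eq_bigr => t _; apply: eq_bigr => i _; rewrite !ffunE.
rewrite H -(bigA_distr_big_dep _ (fun i j => untag 0 [ffun s => F i s] j)).
apply: eq_bigr => i _.
rewrite big_tag; apply: eq_bigr => s _; rewrite /untag; case: (tag s =P i) => // e; exact: ffunE.
Qed.

Lemma sum_prod_dffun_at (R : comNzRingType) (I : finType) (T_ : I -> finType)
  (F : forall i, T_ i -> R) (d : I) (t : T_ d) :
  \sum_(a : {dffun forall i, T_ i} | a d == t) \prod_i F i (a i)
  = F d t * \prod_(i | i != d) \sum_(s : T_ i) F i s.
Proof.
pose G i (s : T_ i) := F i s * (if i == d then (Tagged T_ s == Tagged T_ t)%:R else 1).
transitivity (\sum_(a : {dffun forall i, T_ i}) \prod_i G i (a i)).
  rewrite big_mkcond; apply: eq_bigr => a _.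
  rewrite /G big_split /=.
  have -> : \prod_i (if i == d then (Tagged T_ (a i) == Tagged T_ t)%:R else 1 : R)
          = (a d == t)%:R.
    rewrite (bigD1 d) //= eqxx big1 ?mulr1; last by move=> i /negPf ->.
    by rewrite eq_Tagged.
  by case: (a d == t); rewrite ?mulr1 ?mulr0.
rewrite sum_prod_dffun (bigD1 d) //=; congr (_ * _); last first.
  by apply: eq_bigr => i /negPf Hi; apply: eq_bigr => s _; rewrite /G Hi mulr1.
rewrite (bigD1 t) //= big1 ?addr0 /G eqxx ?eq_Tagged ?eqxx ?mulr1 //.
by move=> s /negPf Hs; rewrite eq_Tagged /= Hs mulr0.
Qed.


Section Aux.
Variables (R : realFieldType) (n : nat) (Atr : 'I_n -> finType).
Variable (u : type_of Atr -> type_of Atr -> R).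
Variable (x : type_of Atr -> R).
Hypothesis (upos : forall a a', 0 < u a a').
Hypothesis (xst : is_state x).

Lemma sp_all (F : forall i, Atr i -> R) :
  \sum_(a : type_of Atr) \prod_i F i (Defs.comp a i) = \prod_i \sum_(s : Atr i) F i s.
Proof. exact: sum_prod_dffun. Qed.

Lemma sp_at (F : forall i, Atr i -> R) d (t : Atr d) :
  \sum_(a : type_of Atr | Defs.comp a d == t) \prod_i F i (Defs.comp a i)
  = F d t * \prod_(i | i != d) \sum_(s : Atr i) F i s.
Proof. exact: sum_prod_dffun_at. Qed.

Lemma part_sum d (f : type_of Atr -> R) :
  \sum_(s : Atr d) \sum_(a : type_of Atr | Defs.comp a d == s) f a = \sum_a f a.
Proof.
rewrite [RHS](partition_big (fun a => Defs.comp a d) predT) //.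
Qed.

Lemma x_ge0 a : 0 <= x a. Proof. by case: xst. Qed.

Lemma ex_pos : exists a, 0 < x a.
Proof.
case: (pickP (fun a => 0 < x a)) => [a Ha|H]; first by exists a.
case: xst => H0 H1; exfalso.
have : \sum_a x a = 0.
  apply: big1 => a _; apply/eqP; rewrite eq_le x_ge0 andbT.
  by rewrite leNgt H.
by rewrite H1 => /eqP; rewrite oner_eq0.
Qed.

Lemma ux_pos a : 0 < ux u x a.
Proof.
case: ex_pos => a' Ha'; rewrite /ux (bigD1 a') //=.
have h1 : 0 < x a' * u a a' by rewrite mulr_gt0.
have h2 : 0 <= \sum_(i | i != a') x i * u a i.
  by apply: sumr_ge0 => i _; rewrite mulr_ge0 ?x_ge0 // ltW.
lra.
Qed.

Lemma U_pos : 0 < uavg u x.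
Proof.
case: ex_pos => a' Ha'; rewrite /uavg (bigD1 a') //=.
have h1 : 0 < x a' * ux u x a' by rewrite mulr_gt0 ?ux_pos.
have h2 : 0 <= \sum_(i | i != a') x i * ux u x i.
  by apply: sumr_ge0 => i _; rewrite mulr_ge0 ?x_ge0 // ltW ?ux_pos.
lra.
Qed.

Lemma W_sum d : \sum_(s : Atr d) trait_wpay u x d s = uavg u x.
Proof. exact: part_sum. Qed.

Lemma marg_sum d : \sum_(s : Atr d) marg x d s = 1.
Proof. by rewrite /marg part_sum; case: xst. Qed.

Lemma W_div_sum d : \sum_(s : Atr d) (trait_wpay u x d s / uavg u x) = 1.
Proof. by rewrite -mulr_suml W_sum divff // gt_eqF // U_pos. Qed.

Lemma xdot_marg_eq r d t :
  xdot_marg u r x d t = trait_wpay u x d t / uavg u x - marg x d t.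
Proof.
rewrite /xdot_marg /xdot sumrB big_split /= -!mulr_sumr -mulr_suml.
rewrite (sp_at (fun i s => trait_wpay u x i s / uavg u x)).
rewrite [\prod_(i | _) _]big1 ?mulr1; last by move=> i _; rewrite W_div_sum.
rewrite /marg /trait_wpay; lra.
Qed.

Lemma xdot_sum r : \sum_a xdot u r x a = 0.
Proof.
rewrite /xdot sumrB big_split /= -!mulr_sumr -mulr_suml (sp_all (fun i s => trait_wpay u x i s / uavg u x)).
rewrite [\prod_i _]big1 ?mulr1; last by move=> i _; rewrite W_div_sum.
case: xst => _ ->; rewrite -/(uavg u x) divff ?gt_eqF ?U_pos //; lra.
Qed.

Lemma marg_ge0 d t : 0 <= marg x d t.
Proof. by apply: sumr_ge0 => a _; apply: x_ge0. Qed.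

Lemma W_marg
  (Ha : forall d t, 0 < marg x d t -> tpay u x d t = uavg u x) d t :
  trait_wpay u x d t / uavg u x = marg x d t.
Proof.
have U0 : uavg u x != 0 by rewrite gt_eqF // U_pos.
have [Hp|] := ltP 0 (marg x d t).
  have := Ha d t Hp; rewrite /tpay => H.
  have m0 : marg x d t != 0 by rewrite gt_eqF.
  have HW : trait_wpay u x d t = uavg u x * marg x d t by rewrite -H /tpay divfK.
  by rewrite HW mulrC mulKf.
rewrite le_eqVlt ltNge marg_ge0 orbF => /eqP Hm0.
have H0 := psumr_eq0P (fun a _ => x_ge0 a) Hm0.
rewrite /trait_wpay big1 ?mul0r; first by rewrite Hm0.
by move=> a Ha'; rewrite H0 // mul0r.
Qed.

End Aux.

Theorem proposition2 (R : realFieldType) (n : nat) (Atr : 'I_n -> finType)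
  (u : type_of Atr -> type_of Atr -> R) (r : R) :
  (2 <= n)%N ->
  (forall d, 0 < #|Atr d|)%N ->
  (forall a a', 0 < u a a') ->
  0 <= r <= 1 ->
  (* (1) trait payoff monotonicity *)
  (forall (x : type_of Atr -> R), is_state x ->
     forall (d : 'I_n) (t t' : Atr d),
       0 < marg x d t -> 0 < marg x d t' ->
       (tpay u x d t > tpay u x d t' <->
        xdot_marg u r x d t / marg x d t > xdot_marg u r x d t' / marg x d t'))
  /\
  (* (2) characterization of stationary states *)
  (forall (x : type_of Atr -> R), is_state x ->
     (stationary u r x <->
      ((forall (d : 'I_n) (t : Atr d), 0 < marg x d t -> tpay u x d t = uavg u x)
       /\ (forall a : type_of Atr, 0 < x a ->
             (1 - r) * (ux u x a / uavg u x) + r * mratio x a = 1)))).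
Proof.
move=> _ _ upos /andP[r0 r1]; split.
  move=> x xst d t t' Ht Ht'.
  have U0 := (@U_pos _ _ _ _ _ upos xst).
  have E s : 0 < marg x d s ->
      xdot_marg u r x d s / marg x d s = tpay u x d s * (uavg u x)^-1 - 1.
    move=> Hs; rewrite (@xdot_marg_eq _ _ _ _ _ upos xst) /tpay; field.
    by rewrite !gt_eqF.
  by rewrite (E t Ht) (E t' Ht') ltrD2r ltr_pM2r ?invr_gt0.
move=> x xst.
have U0 := (@U_pos _ _ _ _ _ upos xst).
have Un0 : uavg u x != 0 by rewrite gt_eqF.
split.
  move=> Hs.
  have Hm d t : trait_wpay u x d t / uavg u x = marg x d t.
    have : xdot_marg u r x d t = 0 by apply: big1 => a _; apply: Hs.
    rewrite (@xdot_marg_eq _ _ _ _ _ upos xst) => H; lra.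
  split.
    move=> d t Hp; rewrite /tpay.
    have -> : trait_wpay u x d t = marg x d t * uavg u x.
      by rewrite -(Hm d t) divfK.
    by field; rewrite gt_eqF.
  move=> a Ha.
  have := Hs a; rewrite /xdot /mratio.
  under eq_bigr do rewrite Hm.
  move=> H.
  have xa0 : x a != 0 by rewrite gt_eqF.
  set P := \prod_(d : 'I_n) marg x d (Defs.comp a d) in H *.
  have -> : (1 - r) * (ux u x a / uavg u x) + r * (P / x a)
     = ((1 - r) * (x a * ux u x a / uavg u x) + r * P) / x a.
    by field; apply/andP.
  have -> : (1 - r) * (x a * ux u x a / uavg u x) + r * P = x a by lra.
  by rewrite divff.
move=> [Ha Hb].
have Hm := (@W_marg _ _ _ _ _ upos xst Ha).
have Hge : forall a, true -> 0 <= xdot u r x a.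
  move=> a _; rewrite /xdot.
  under eq_bigr do rewrite Hm.
  set P := \prod_(d : 'I_n) marg x d (Defs.comp a d).
  have P0 : 0 <= P by apply: prodr_ge0 => d _; apply: marg_ge0.
  have [Hp|] := ltP 0 (x a).
    have := Hb a Hp; rewrite /mratio -/P => H.
    have xa0 : x a != 0 by rewrite gt_eqF.
    have -> : (1 - r) * (x a * ux u x a / uavg u x) + r * P - x a
      = x a * ((1 - r) * (ux u x a / uavg u x) + r * (P / x a) - 1).
      by field; apply/andP.
    by rewrite H subrr mulr0.
  rewrite le_eqVlt ltNge x_ge0 // orbF => /eqP ->.
  rewrite !mul0r mulr0 subr0 add0r; exact: mulr_ge0.
move=> a; exact: (psumr_eq0P Hge (@xdot_sum _ _ _ _ _ upos xst r)).
Qed.
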